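(* We have $\mathsf{E}^{-1}=\mathsf{E}$, $\mathsf{E}\mathsf{A}\mathsf{E}=\mathsf{B}$, $\mathsf{E}\mathsf{B}\mathsf{E}=\mathsf{A}$, $\mathsf{E}\mathsf{C}\mathsf{E}=\mathsf{C}$. For every $d\in\mathbb{N}$ and $m_1,\dots,m_{2d}\in\mathbb{Z}$, with $t=\operatorname{tr}(W)$, $s=\operatorname{tr}^*(W)$, $W=W_1(m_1,\dots,m_{2d})$, the characteristic polynomial of $\mathsf{C}\mathsf{W}(m_1,\dots,m_{2d})\mathsf{E}$ is $$\det(xI_5-\mathsf{C}\mathsf{W}\mathsf{E})=(x-1)\big(1-4sx-(s^2+4ts+2)x^2-4sx^3+x^4\big),$$ and hence its eigenvalues are $1$ and $$s+\tfrac12\sqrt{5s^2+4ts+4}\pm\tfrac12\sqrt{9s^2+4ts+4s\sqrt{5s^2+4ts+4}},\qquad s-\tfrac12\sqrt{5s^2+4ts+4}\pm\tfrac12\sqrt{9s^2+4ts-4s\sqrt{5s^2+4ts+4}}.$$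
   Context: $A_1=\begin{pmatrix}1&1\\0&1\end{pmatrix}$, $B_1=\begin{pmatrix}1&0\\1&1\end{pmatrix}$, $W_1(m_1,\dots,m_{2d})=\prod_{i=1}^dA_1^{m_{2i-1}}B_1^{m_{2i}}$. Let $\mathsf{A}=\begin{pmatrix}1&1&0&0&2\\0&1&0&0&0\\0&0&1&1&0\\0&0&0&1&0\\0&0&0&0&1\end{pmatrix}$, $\mathsf{B}=\begin{pmatrix}1&0&0&0&0\\1&1&0&0&0\\0&0&1&0&0\\0&0&1&1&2\\0&0&0&0&1\end{pmatrix}$, $\mathsf{C}=\begin{pmatrix}1&0&0&0&0\\0&1&0&0&0\\0&0&1&0&0\\0&0&0&1&0\\2&0&0&2&1\end{pmatrix}$, $\mathsf{E}=\begin{pmatrix}0&0&0&1&0\\0&0&1&0&0\\0&1&0&0&0\\1&0&0&0&0\\0&0&0&0&1\end{pmatrix}$, and $\mathsf{W}(m_1,\dots,m_{2d})=\prod_{i=1}^d\mathsf{A}^{m_{2i-1}}\mathsf{B}^{m_{2i}}$. $\operatorname{tr}^*(M)=M_{1,2}+M_{2,1}$ is the anti-trace of a $2\times2$ matrix. *)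

(* Defs.v *)
From HB Require Import structures.
From mathcomp Require Import all_boot all_order all_algebra all_field.
Set Implicit Arguments. Unset Strict Implicit. Unset Printing Implicit Defensive.
Import Order.TTheory GRing.Theory Num.Theory.
Local Open Scope ring_scope.

Definition mx_of_rows (m n : nat) (rows : seq (seq int)) : 'M[int]_(m, n) :=
  \matrix_(i < m, j < n) nth 0 (nth [::] rows i) j.

Definition A1 : 'M[int]_2 := mx_of_rows 2 2 [:: [:: 1; 1]; [:: 0; 1]].
Definition B1 : 'M[int]_2 := mx_of_rows 2 2 [:: [:: 1; 0]; [:: 1; 1]].

(* W_1(m_1,...,m_{2d}) = prod_{i=1}^d A1^{m_{2i-1}} B1^{m_{2i}};
   here m is 0-indexed: m_{2i-1} = m (2i-2), m_{2i} = m (2i-1). *)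
Definition W1 (d : nat) (m : nat -> int) : 'M[int]_2 :=
  \prod_(i < d) (A1 ^ m (2 * i)%N * B1 ^ m (2 * i).+1).

Definition sA : 'M[int]_5 := mx_of_rows 5 5
  [:: [:: 1; 1; 0; 0; 2]; [:: 0; 1; 0; 0; 0]; [:: 0; 0; 1; 1; 0];
      [:: 0; 0; 0; 1; 0]; [:: 0; 0; 0; 0; 1]].
Definition sB : 'M[int]_5 := mx_of_rows 5 5
  [:: [:: 1; 0; 0; 0; 0]; [:: 1; 1; 0; 0; 0]; [:: 0; 0; 1; 0; 0];
      [:: 0; 0; 1; 1; 2]; [:: 0; 0; 0; 0; 1]].
Definition sC : 'M[int]_5 := mx_of_rows 5 5
  [:: [:: 1; 0; 0; 0; 0]; [:: 0; 1; 0; 0; 0]; [:: 0; 0; 1; 0; 0];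
      [:: 0; 0; 0; 1; 0]; [:: 2; 0; 0; 2; 1]].
Definition sE : 'M[int]_5 := mx_of_rows 5 5
  [:: [:: 0; 0; 0; 1; 0]; [:: 0; 0; 1; 0; 0]; [:: 0; 1; 0; 0; 0];
      [:: 1; 0; 0; 0; 0]; [:: 0; 0; 0; 0; 1]].

Definition sW (d : nat) (m : nat -> int) : 'M[int]_5 :=
  \prod_(i < d) (sA ^ m (2 * i)%N * sB ^ m (2 * i).+1).

Definition antitr (M : 'M[int]_2) : int := M 0 1 + M 1 0.

(* Main.v *)
Require Import Defs.
From HB Require Import structures.
From mathcomp Require Import all_boot all_order all_algebra all_field.
From mathcomp Require Import ring.
Import Order.TTheory GRing.Theory Num.Theory.
Local Open Scope ring_scope.
Fixpoint nle (a b : nat) : bool :=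
  match a, b with 0, _ => true | _.+1, 0 => false | a'.+1, b'.+1 => nle a' b' end.
Lemma nleE a b : nle a b = (a <= b)%N.
Proof. by elim: a b => [|a IH] [|b] //=; rewrite IH. Qed.
Definition shiftf {R : Type} (f : nat -> nat -> R) (j : nat) :=
  fun x y => f x.+1 (if nle j y then y.+1 else y).
Fixpoint sumf {R : nzRingType} (g : nat -> R) (k : nat) : R :=
  match k with 0 => 0 | k'.+1 => sumf g k' + g k' end.
Fixpoint detl {R : nzRingType} (n : nat) (f : nat -> nat -> R) : R :=
  match n with 0 => 1 | n'.+1 => sumf (fun j => (-1) ^+ j * f 0%N j * detl n' (shiftf f j)) n'.+1 end.
Lemma sumfE (R : nzRingType) (g : nat -> R) k : \sum_(j < k) g j = sumf g k.
Proof. by elim: k => [|k IH]; rewrite ?big_ord0 // big_ord_recr /= IH. Qed.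
Lemma sumfE_aux (R : nzRingType) n (f : nat -> nat -> R) :
  sumf (fun j => (-1) ^+ j * f 0%N j * detl n (shiftf f j)) n.+1 = detl n.+1 f.
Proof. by []. Qed.
Lemma det_detl (R : comNzRingType) n (f : nat -> nat -> R) :
  \det (\matrix_(i < n, j < n) f i j) = detl n f.
Proof.
elim: n f => [|n IH] f; first exact: det_mx00.
rewrite (expand_det_row _ ord0) -sumfE_aux -sumfE; apply: eq_bigr => j _; cbv beta.
rewrite mxE /cofactor add0n -IH -mulrA mulrC -!mulrA; congr (_ * _).
rewrite mulrC; congr (_ * _); congr (\det _).
apply/matrixP => i k; rewrite !mxE /shiftf nleE /= /bump leq0n add1n; by case: leqP.
Qed.

Definition Mx (a b c e : int) : 'M[int]_5 := mx_of_rows 5 5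
  [:: [:: 0; 0; b; a; 2*b]; [:: 0; 0; e; c; 2*e-2]; [:: b; a; 0; 0; 2*a-2];
      [:: e; c; 0; 0; 2*c]; [:: 2*e; 2*c; 2*b; 2*a; 4*b+4*c+1]].

Definition tbl (a b c e : int) (i j : nat) : {poly int} :=
  match i, j with
  | 0, 0 => 'X | 0, 1 => 0 | 0, 2 => - b%:P | 0, 3 => - a%:P | 0, _ => - (2*b)%:P
  | 1, 0 => 0 | 1, 1 => 'X | 1, 2 => - e%:P | 1, 3 => - c%:P | 1, _ => - (2*e-2)%:P
  | 2, 0 => - b%:P | 2, 1 => - a%:P | 2, 2 => 'X | 2, 3 => 0 | 2, _ => - (2*a-2)%:P
  | 3, 0 => - e%:P | 3, 1 => - c%:P | 3, 2 => 0 | 3, 3 => 'X | 3, _ => - (2*c)%:P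
  | _, 0 => - (2*e)%:P | _, 1 => - (2*c)%:P | _, 2 => - (2*b)%:P | _, 3 => - (2*a)%:P
  | _, _ => 'X - (4*b+4*c+1)%:P
  end.

Lemma cpmx a b c e : char_poly_mx (Mx a b c e) = \matrix_(i < 5, j < 5) tbl a b c e i j.
Proof.
apply/matrixP => i j; rewrite !mxE.
case: i => [[|[|[|[|[|i]]]]] Hi] //; case: j => [[|[|[|[|[|j]]]]] Hj] //=;
  rewrite ?mulr1n ?mulr0n ?subr0 ?sub0r //.
Qed.

Lemma mod_eq (R : comNzRingType) (x y d q : R) : d = 0 -> x = y + d * q -> x = y.
Proof. by move=> -> ->; rewrite mul0r addr0. Qed.

Lemma charMx a b c e : a * e - b * c = 1 ->
  char_poly (Mx a b c e) = ('X - 1) * (1 - (4 * (b+c)) *: 'X - ((b+c) ^+ 2 + 4 * (a+e) * (b+c) + 2) *: 'X ^+ 2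
                  - (4 * (b+c)) *: 'X ^+ 3 + 'X ^+ 4).
Proof.
move=> hd.
rewrite /char_poly cpmx det_detl.
cbv beta iota zeta delta [detl sumf shiftf nle tbl].
rewrite -!mul_polyC.
apply: (@mod_eq _ _ _ ((a*e - b*c)%:P - 1) (('X - 1) * ((a*e - b*c)%:P - 4%:P * (b+c)%:P * 'X - 2%:P * 'X ^+ 2 + 1))).
  by rewrite hd subrr.
Time ring.
Qed.
Definition Fm (W : 'M[int]_2) : 'M[int]_5 := mx_of_rows 5 5
  [:: [:: W 0 0; W 0 1; 0; 0; 2 * W 0 1]; [:: W 1 0; W 1 1; 0; 0; 2 * (W 1 1 - 1)];
      [:: 0; 0; W 0 0; W 0 1; 2 * (W 0 0 - 1)]; [:: 0; 0; W 1 0; W 1 1; 2 * W 1 0];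
      [:: 0; 0; 0; 0; 1]].

Lemma mx2E (X : 'M[int]_2) : X = mx_of_rows 2 2 [:: [:: X 0 0; X 0 1]; [:: X 1 0; X 1 1]].
Proof.
apply/matrixP => i j; rewrite mxE.
by case: i => [[|[|i]] Hi]; case: j => [[|[|j]] Hj] //=; congr (X _ _); apply/val_inj.
Qed.

Lemma FmM' x0 x1 x2 x3 y0 y1 y2 y3 :
  Fm (mx_of_rows 2 2 [:: [:: x0; x1]; [:: x2; x3]] * mx_of_rows 2 2 [:: [:: y0; y1]; [:: y2; y3]]) =
  Fm (mx_of_rows 2 2 [:: [:: x0; x1]; [:: x2; x3]]) * Fm (mx_of_rows 2 2 [:: [:: y0; y1]; [:: y2; y3]]).
Proof.
apply/matrixP => i j; rewrite /Fm /mx_of_rows !mxE !big_ord_recr !big_ord0 /= !mxE.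
case: i => [[|[|[|[|[|i]]]]] Hi] //; case: j => [[|[|[|[|[|j]]]]] Hj] //=;
  rewrite ?mxE ?big_ord_recr ?big_ord0 /= ?mxE /=; ring.
Qed.

Lemma FmM (X Y : 'M[int]_2) : Fm (X * Y) = Fm X * Fm Y.
Proof. by rewrite (mx2E X) (mx2E Y) FmM'. Qed.

Lemma Fm1 : Fm 1 = 1.
Proof. by apply/matrixP => i j; rewrite /Fm /mx_of_rows ?mxE ?big_ord_recr ?big_ord0 /= ?mxE;
  case: i => [[|[|[|[|[|i]]]]] Hi] //; case: j => [[|[|[|[|[|j]]]]] Hj] //=. Qed.

Lemma sAF : sA = Fm A1.
Proof. by rewrite /sA /A1; apply/matrixP => i j; rewrite /Fm /mx_of_rows ?mxE ?big_ord_recr ?big_ord0 /= ?mxE;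
  case: i => [[|[|[|[|[|i]]]]] Hi] //; case: j => [[|[|[|[|[|j]]]]] Hj] //=. Qed.
Lemma sBF : sB = Fm B1.
Proof. by rewrite /sB /B1; apply/matrixP => i j; rewrite /Fm /mx_of_rows ?mxE ?big_ord_recr ?big_ord0 /= ?mxE;
  case: i => [[|[|[|[|[|i]]]]] Hi] //; case: j => [[|[|[|[|[|j]]]]] Hj] //=. Qed.

Lemma FmX (X : 'M[int]_2) n : Fm (X ^+ n) = Fm X ^+ n.
Proof. by elim: n => [|n IH]; rewrite ?expr0 ?Fm1 // !exprS FmM IH. Qed.

Lemma FmV (X : 'M[int]_2) : X \is a GRing.unit -> Fm (X^-1) = (Fm X)^-1.
Proof.
move=> Xu.
have h1 : Fm X * Fm (X^-1) = 1 by rewrite -FmM mulrV // Fm1.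
have h2 : Fm (X^-1) * Fm X = 1 by rewrite -FmM mulVr // Fm1.
have Fu : Fm X \is a GRing.unit by apply/unitrP; exists (Fm X^-1).
by rewrite -[RHS]mulr1 -h1 mulrA mulVr // mul1r.
Qed.

Lemma Fmz (X : 'M[int]_2) (k : int) : X \is a GRing.unit -> Fm (X ^ k) = Fm X ^ k.
Proof.
move=> Xu; case: k => n.
  exact: FmX.
change (Fm ((X ^+ n.+1)^-1) = (Fm X ^+ n.+1)^-1).
by rewrite FmV ?unitrX // FmX.
Qed.

Lemma A1u : A1 \is a GRing.unit.
Proof.
apply/unitrP; exists (mx_of_rows 2 2 [:: [:: 1; -1]; [:: 0; 1]]); split;
  rewrite /A1; apply/matrixP => i j; rewrite /mx_of_rows ?mxE ?big_ord_recr ?big_ord0 /= ?mxE;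
  by case: i => [[|[|i]] Hi] //; case: j => [[|[|j]] Hj].
Qed.
Lemma B1u : B1 \is a GRing.unit.
Proof.
apply/unitrP; exists (mx_of_rows 2 2 [:: [:: 1; 0]; [:: -1; 1]]); split;
  rewrite /B1; apply/matrixP => i j; rewrite /mx_of_rows ?mxE ?big_ord_recr ?big_ord0 /= ?mxE;
  by case: i => [[|[|i]] Hi] //; case: j => [[|[|j]] Hj].
Qed.

Lemma sWF d m : sW d m = Fm (W1 d m).
Proof.
elim: d => [|d IH]; first by rewrite /sW /W1 !big_ord0 Fm1.
rewrite /sW /W1 !big_ord_recr /= -/(sW d m) -/(W1 d m) IH.
move: (W1 d m) (m (2*d)%N) (m (2*d).+1) => W k1 k2.
by rewrite !FmM (Fmz _ k1 A1u) (Fmz _ k2 B1u) -sAF -sBF.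
Qed.

Lemma Mdef a b c e : sC * Fm (mx_of_rows 2 2 [:: [:: a; b]; [:: c; e]]) * sE = Mx a b c e.
Proof.
apply/matrixP => i j; rewrite /sC /sE /Mx /Fm /mx_of_rows.
do 3 rewrite ?mxE ?big_ord_recr ?big_ord0 /=.
case: i => [[|[|[|[|[|i]]]]] Hi] //; case: j => [[|[|[|[|[|j]]]]] Hj] //=; ring.
Qed.

Lemma det2 x0 x1 x2 x3 : \det (mx_of_rows 2 2 [:: [:: x0; x1]; [:: x2; x3]]) = x0 * x3 - x1 * x2.
Proof.
rewrite /mx_of_rows.
have -> := @det_detl _ 2 (fun i j => nth 0 (nth [::] [:: [:: x0; x1]; [:: x2; x3]] i) j).
cbv beta iota zeta delta [detl sumf shiftf nle]; rewrite /=; ring.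
Qed.

Lemma detz (X : 'M[int]_2) (k : int) : \det X = 1 -> X \is a GRing.unit -> \det (X ^ k) = 1.
Proof.
move=> dX Xu.
have hp n : \det (X ^+ n) = 1.
  by elim: n => [|n IH]; rewrite ?expr0 ?det1 // exprS det_mulmx dX IH mulr1.
case: k => n; first exact: hp.
change (\det (invmx (X ^+ n.+1)) = 1).
by rewrite det_inv hp invr1.
Qed.

Lemma detW d m : \det (W1 d m) = 1.
Proof.
elim: d => [|d IH]; first by rewrite /W1 big_ord0 det1.
rewrite /W1 big_ord_recr /= -/(W1 d m) !det_mulmx IH !detz ?A1u ?B1u ?mulr1 //.
  by rewrite /B1 det2.
by rewrite /A1 det2.
Qed.

Lemma sEE : sE * sE = 1.
Proof.
apply/matrixP => i j; rewrite /sE /mx_of_rows.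
do 2 rewrite ?mxE ?big_ord_recr ?big_ord0 /=.
by case: i => [[|[|[|[|[|i]]]]] Hi] //; case: j => [[|[|[|[|[|j]]]]] Hj].
Qed.

Lemma part1 : [/\ sE \in unitmx, invmx sE = sE,
      sE * sA * sE = sB, sE * sB * sE = sA & sE * sC * sE = sC].
Proof.
have [Eu _] := mulmx1_unit sEE.
split => //.
- by rewrite -[LHS]mulmx1 -[X in _ *m X]sEE mulmxA mulVmx // mul1mx.
- apply/matrixP => i j; rewrite /sE /sA /sB /mx_of_rows.
  do 3 rewrite ?mxE ?big_ord_recr ?big_ord0 /=.
  by case: i => [[|[|[|[|[|i]]]]] Hi] //; case: j => [[|[|[|[|[|j]]]]] Hj].
- apply/matrixP => i j; rewrite /sE /sA /sB /mx_of_rows.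
  do 3 rewrite ?mxE ?big_ord_recr ?big_ord0 /=.
  by case: i => [[|[|[|[|[|i]]]]] Hi] //; case: j => [[|[|[|[|[|j]]]]] Hj].
- apply/matrixP => i j; rewrite /sE /sC /mx_of_rows.
  do 3 rewrite ?mxE ?big_ord_recr ?big_ord0 /=.
  by case: i => [[|[|[|[|[|i]]]]] Hi] //; case: j => [[|[|[|[|[|j]]]]] Hj].
Qed.
Lemma quadC (u v : algC) : ('X - (u + v)%:P) * ('X - (u - v)%:P) = 'X ^+ 2 - (2 * u)%:P * 'X + (u ^+ 2 - v ^+ 2)%:P.
Proof. ring. Qed.

Lemma prod1 (s t D E : algC) (hD : D ^+ 2 = 5 * s ^+ 2 + 4 * t * s + 4)
  (hE : E ^+ 2 = 9 * s ^+ 2 + 4 * t * s + 4 * s * D) :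
  (s + D / 2) ^+ 2 - (E / 2) ^+ 2 = 1.
Proof.
apply: (@mod_eq _ _ _ (E ^+ 2 - (9 * s ^+ 2 + 4 * t * s + 4 * s * D)) (- 1 / 4)).
  by rewrite hE subrr.
apply: (@mod_eq _ _ _ (D ^+ 2 - (5 * s ^+ 2 + 4 * t * s + 4)) (1 / 4)).
  by rewrite hD subrr.
field. all: by rewrite ?pnatr_eq0.
Qed.

Lemma prod2 (s t D E : algC) (hD : D ^+ 2 = 5 * s ^+ 2 + 4 * t * s + 4)
  (hE : E ^+ 2 = 9 * s ^+ 2 + 4 * t * s - 4 * s * D) :
  (s - D / 2) ^+ 2 - (E / 2) ^+ 2 = 1.
Proof.
apply: (@mod_eq _ _ _ (E ^+ 2 - (9 * s ^+ 2 + 4 * t * s - 4 * s * D)) (- 1 / 4)).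
  by rewrite hE subrr.
apply: (@mod_eq _ _ _ (D ^+ 2 - (5 * s ^+ 2 + 4 * t * s + 4)) (1 / 4)).
  by rewrite hD subrr.
field. all: by rewrite ?pnatr_eq0.
Qed.

Lemma quartC (s t D E1 E2 : algC) (hD : D ^+ 2 = 5 * s ^+ 2 + 4 * t * s + 4)
  (hE1 : E1 ^+ 2 = 9 * s ^+ 2 + 4 * t * s + 4 * s * D)
  (hE2 : E2 ^+ 2 = 9 * s ^+ 2 + 4 * t * s - 4 * s * D) :
  ('X - 1) * (1 - (4 * s)%:P * 'X - (s ^+ 2 + 4 * t * s + 2)%:P * 'X ^+ 2
     - (4 * s)%:P * 'X ^+ 3 + 'X ^+ 4) =
  \prod_(r <- [:: 1; s + D / 2 + E1 / 2; s + D / 2 - E1 / 2; s - D / 2 + E2 / 2; s - D / 2 - E2 / 2])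
     ('X - r%:P).
Proof.
rewrite !big_cons big_nil mulr1 polyC1.
rewrite [('X - (s + D / 2 + E1 / 2)%:P) * _]mulrA quadC (@prod1 s t D E1 hD hE1).
rewrite quadC (@prod2 s t D E2 hD hE2).
have -> : 2 * (s + D / 2) = 2 * s + D by field; rewrite ?pnatr_eq0.
have -> : 2 * (s - D / 2) = 2 * s - D by field; rewrite ?pnatr_eq0.
apply: (@mod_eq _ _ _ (D ^+ 2 - (5 * s ^+ 2 + 4 * t * s + 4))%:P (('X - 1) * 'X ^+ 2)).
  by rewrite hD subrr.
ring.
Qed.

Theorem mainTheorem13 :
  [/\ sE \in unitmx, invmx sE = sE,
      sE * sA * sE = sB, sE * sB * sE = sA & sE * sC * sE = sC] /\
  forall (d : nat) (m : nat -> int),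
    let t := \tr (W1 d m) in
    let s := antitr (W1 d m) in
    let M := sC * sW d m * sE in
    char_poly M =
      ('X - 1) * (1 - (4 * s) *: 'X - (s ^+ 2 + 4 * t * s + 2) *: 'X ^+ 2
                  - (4 * s) *: 'X ^+ 3 + 'X ^+ 4)
    /\
    (let sc : algC := s%:~R in
     let tc : algC := t%:~R in
     let D := sqrtC (5 * sc ^+ 2 + 4 * tc * sc + 4) in
     let r1 := sc + D / 2 + sqrtC (9 * sc ^+ 2 + 4 * tc * sc + 4 * sc * D) / 2 in
     let r2 := sc + D / 2 - sqrtC (9 * sc ^+ 2 + 4 * tc * sc + 4 * sc * D) / 2 in
     let r3 := sc - D / 2 + sqrtC (9 * sc ^+ 2 + 4 * tc * sc - 4 * sc * D) / 2 in
     let r4 := sc - D / 2 - sqrtC (9 * sc ^+ 2 + 4 * tc * sc - 4 * sc * D) / 2 in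
     char_poly (map_mx intr M : 'M[algC]_5) =
       \prod_(r <- [:: 1; r1; r2; r3; r4]) ('X - r%:P)).
Proof.
split; first exact: part1.
move=> d m t s M.
have hM : M = Mx (W1 d m 0 0) (W1 d m 0 1) (W1 d m 1 0) (W1 d m 1 1).
  by rewrite /M sWF {1}(mx2E (W1 d m)) Mdef.
have hdet : W1 d m 0 0 * W1 d m 1 1 - W1 d m 0 1 * W1 d m 1 0 = 1.
  by have := detW d m; rewrite {1}(mx2E (W1 d m)) det2.
have ht : t = W1 d m 0 0 + W1 d m 1 1.
  rewrite /t /mxtrace {1}(mx2E (W1 d m)) /mx_of_rows !big_ord_recr big_ord0 /= !mxE /=.
  by rewrite add0r.
have hs : s = W1 d m 0 1 + W1 d m 1 0 by [].
move: hM hdet ht hs.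
move: (W1 d m 0 0) (W1 d m 0 1) (W1 d m 1 0) (W1 d m 1 1) => a b c e hM hdet ht hs.
have hcp := charMx _ _ _ _ hdet.
split.
  by rewrite hM hcp ht hs.
move=> sc tc D r1 r2 r3 r4.
rewrite /r1 /r2 /r3 /r4.
rewrite -(@quartC sc tc D _ _ _ _ _); last 3 first.
- by rewrite /D sqrtCK.
- by rewrite sqrtCK.
- by rewrite sqrtCK.
rewrite -map_char_poly hM hcp /sc /tc ht hs.
rewrite -!mul_polyC !(rmorphM, rmorphB, rmorphD, rmorph1, rmorphXn) /= !map_polyC map_polyX.
rewrite -[_ 1 a]/(a%:~R) -[_ 1 b]/(b%:~R) -[_ 1 c]/(c%:~R) -[_ 1 e]/(e%:~R).
ring.
Qed.
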